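(* Let $E/\mathbb{Q}$ be an elliptic curve without complex multiplication that has abelian entanglements, let $m$ be a positive integer with prime factorisation $m=\prod_{\ell}\ell^{\alpha_\ell}$, and for each prime $\ell\mid m$ let $S(\ell)$ be a nonempty subset of $G(\ell^{\alpha_\ell})$. Put $\mathcal{S}_m=\prod_{\ell\mid m}S(\ell)$ and $\mathcal{G}_m=\prod_{\ell\mid m}G(\ell^{\alpha_\ell})$. For each character $\tilde\chi$ of the finite abelian group $\Phi_m=\mathcal{G}_m/G(m)$ let $\chi=\tilde\chi\circ\psi_m$, where $\psi_m:\mathcal{G}_m\to\Phi_m$ is the quotient map, let $\chi_\ell$ be the restriction of $\chi$ to the factor $G(\ell^{\alpha_\ell})$, and set $E_{\chi,\ell}=\frac{1}{|S(\ell)|}\sum_{x\in S(\ell)}\chi_\ell(x)$. Then $$\frac{|\mathcal{S}_m\cap G(m)|}{|G(m)|}=\Big(1+\sum_{\tilde\chi\in\widehat{\Phi}_m\setminus\{1\}}\prod_{\ell\mid m}E_{\chi,\ell}\Big)\frac{|\mathcal{S}_m|}{|\mathcal{G}_m|}.$$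
   Context: $G(n)\leqslant\mathrm{GL}_2(\mathbb{Z}/n\mathbb{Z})$ denotes the image of the mod-$n$ Galois representation of $E$, and $G(m)$ is viewed via the Chinese remainder theorem as a subgroup of $\mathcal{G}_m$; since $E$ has abelian entanglements, $G(m)$ is normal in $\mathcal{G}_m$ with abelian quotient. $\widehat{\Phi}_m$ is the group of homomorphisms $\Phi_m\to\mathbb{C}^\times$. Definitions: let $G\leqslant\mathrm{GL}_2(\widehat{\mathbb{Z}})$ be the adelic image of $E$ and $G_{n^\infty}$ its image in $\prod_{\ell\mid n}\mathrm{GL}_2(\mathbb{Z}_\ell)$; $n$ is stable if $G_{n^\infty}$ is the full preimage of $G(n)$ under reduction, split if $G=G_{n^\infty}\times\prod_{\ell\nmid n}\mathrm{GL}_2(\mathbb{Z}_\ell)$; $m_E$ is the smallest split and stable positive integer. A subgroup $H\leqslant H_1\times\dots\times H_k$ surjecting onto each factor has abelian entanglements if for every partition $\{A,B\}$ of $\{1,\dots,k\}$ into nonempty sets the Goursat quotient $H_A/\{x\in H_A:(x,1)\in H\}$ is abelian ($H_A$ = image of $H$ in $\prod_{i\in A}H_i$). $E$ has abelian entanglements if $G(m_E)\leqslant\prod_{\ell^\alpha\|m_E}G(\ell^\alpha)$ has abelian entanglements. *)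

(* Defs.v *)
From mathcomp Require Import all_boot all_order all_algebra all_fingroup all_solvable all_field all_character.
Set Implicit Arguments. Unset Strict Implicit. Unset Printing Implicit Defensive.
Import GRing.Theory Num.Theory.

(* Abstract group-theoretic setting:
   - gT ambient finite group type, I a finite index type (the primes l | m),
   - Gl l : {group gT} plays G(l^{alpha_l}); the full group
     calG = \big[dprod/1]_l Gl l is the (internal) direct product,
   - H : {group gT} plays G(m) <= calG,
   - a character chi~ of Phi = calG / H is a linear irreducible character
     'chi_i of the quotient group, and chi = chi~ o psi is x |-> 'chi_i (coset H x). *)

Local Open Scope ring_scope.

Definition Echi (gT : finGroupType) (G H : {group gT}) (i : Iirr (G / H))
    (S : {set gT}) : algC :=
  (#|S|%:R)^-1 * \sum_(x in S) 'chi_i (coset H x).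

(* Main.v *)
Require Import Defs.
From mathcomp Require Import all_boot all_order all_algebra all_fingroup all_solvable all_field all_character.
From mathcomp Require Import ring.
Set Implicit Arguments. Unset Strict Implicit. Unset Printing Implicit Defensive.
Import GRing.Theory Num.Theory.
Local Open Scope ring_scope.

Lemma sum_prodS (gT : finGroupType) (I : finType) (Gl : I -> {group gT}) (G : {group gT})
  (Sl : I -> {set gT}) (f : gT -> algC) :
  (\big[dprod/1]_(l : I) Gl l)%g = G -> (forall l, Sl l \subset Gl l) ->
  f 1%g = 1 -> {in G &, {morph f : x y / (x * y)%g >-> x * y}} ->
  \sum_(x in (\prod_(l : I) Sl l)%g) f x = \prod_(l : I) \sum_(x in Sl l) f x.
Proof.
move=> defG sSG f1 fM.
rewrite bigA_distr_big_dep.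
pose h := fun c : {ffun I -> gT} => (\prod_(i : I) c i)%g.
have inG c : c \in family (fun l => [pred x | x \in Sl l]) -> h c \in G.
  move=> /familyP Fc; rewrite -(bigdprodW defG); apply: mem_prodg => i _.
  exact: (subsetP (sSG i)) (Fc i).
have -> : (\prod_(l : I) Sl l)%g = h @: [set c | c \in family (fun l => [pred x | x \in Sl l])].
  apply/setP => x; apply/prodsgP/imsetP => [[c Sc ->] | [c]].
    exists (finfun c); first by rewrite inE; apply/familyP => i; rewrite ffunE /= Sc.
    by rewrite /h; apply: eq_bigr => i _; rewrite ffunE.
  rewrite inE => /familyP Fc ->; exists c => // i _; exact: Fc i.
rewrite big_imset; last first.
  move=> c1 c2 F1 F2 eqh; rewrite !in_set in F1 F2.
  have [c [_ _ uniq]] := mem_bigdprod defG (inG c1 F1).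
  have Fi (c' : {ffun I -> gT}) : c' \in family (fun l => [pred x | x \in Sl l]) ->
      forall i, true -> c' i \in Gl i.
    by move=> /familyP Fc' i _; exact: (subsetP (sSG i)) (Fc' i).
  apply/ffunP => i; rewrite (uniq c1 (Fi _ F1)) // (uniq c2 (Fi _ F2)) //.
apply: eq_big => [c|c]; first by rewrite in_set.
rewrite in_set => /familyP Fc; rewrite /h.
suff [] : ((\prod_i c i)%g \in G /\ f (\prod_i c i)%g = \prod_i f (c i)) by [].
apply: (big_ind2 (fun a b => a \in G /\ f a = b)) => //.
- by move=> x1 x2 y1 y2 [Gx <-] [Gy <-]; rewrite groupM // fM.
- move=> i _; split => //; rewrite -(bigdprodWY defG); apply: mem_gen.
  by apply/bigcupP; exists i => //; exact: (subsetP (sSG i)) (Fc i).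
Qed.

Lemma theorem3p4_aux (gT : finGroupType) (I : finType)
    (Gl : I -> {group gT}) (G H : {group gT}) (Sl : I -> {set gT}) :
  (\big[dprod/1]_(l : I) Gl l)%g = G ->
  H \subset G ->
  (forall l : I, Gl l \subset H * (\prod_(j : I | j != l) Gl j))%g ->
  (H <| G)%g ->
  abelian (G / H)%g ->
  (forall l : I, Sl l \subset Gl l) ->
  (forall l : I, Sl l != set0) ->
  let calS := (\prod_(l : I) Sl l)%g in
  ((#|calS :&: H|%:R / #|H|%:R : algC) =
   (1 + \sum_(i : Iirr (G / H)%G | (i != 0) && ('chi_i \is a linear_char))
          \prod_(l : I) Echi i (Sl l)) * (#|calS|%:R / #|G|%:R))%R.
Proof.
move=> defG sHG _ nHG abGH sSG S0 calS.
have nGH : (G \subset 'N(H))%g := normal_norm nHG.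
have lin (i : Iirr (G / H)%G) : 'chi_i \is a linear_char by apply/char_abelianP.
pose f (i : Iirr (G / H)%G) x := 'chi_i (coset H x).
have fM i : {in G &, {morph f i : x y / (x * y)%g >-> x * y}}.
  move=> x y Gx Gy; rewrite /f morphM ?(subsetP nGH) //.
  by rewrite (lin_charM (lin i)) ?mem_quotient.
have f1 i : f i 1%g = 1 by rewrite /f morph1 (lin_char1 (lin i)).
have sSG' : calS \subset G.
  apply/subsetP => x /prodsgP [c Sc ->]; rewrite -(bigdprodW defG).
  by apply: mem_prodg => l _; exact: (subsetP (sSG l)) (Sc l isT).
have cardS : #|calS|%:R = \prod_l (#|Sl l|%:R : algC).
  have := sum_prodS defG sSG (f := fun _ => 1) erefl (fun _ _ _ _ => esym (mulr1 1)).
  rewrite sumr_const => ->; apply: eq_bigr => l _; by rewrite sumr_const.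
have ind x : x \in G -> \sum_i f i x = #|(G / H)%g|%:R *+ (x \in H).
  move=> Gx; transitivity (cfReg (G / H)%G (coset H x)).
    rewrite cfReg_sum sum_cfunE.
    by apply: eq_bigr => i _; rewrite cfunE (lin_char1 (lin i)) mul1r.
  rewrite cfRegE (_ : (coset H x == 1%g) = (x \in H)) //.
  apply/eqP/idP => [|Hx]; first exact: coset_idr (subsetP nGH x Gx).
  exact: coset_id.
have inG x : x \in calS -> x \in G by move=> /(subsetP sSG').
have nz (n : nat) : (0 < n)%N -> (n%:R : algC) != 0 by rewrite pnatr_eq0 -lt0n.
have QH0 : (0 < #|(G / H)%g|)%N by rewrite cardG_gt0.
have step1 : #|calS :&: H|%:R = #|(G / H)%g|%:R^-1 * \sum_i \sum_(x in calS) f i x.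
  rewrite exchange_big big_distrr /=.
  transitivity (\sum_(x in calS) ((x \in H)%:R : algC)).
    rewrite (bigID (fun x => x \in H)) /= [X in _ + X]big1 ?addr0; last first.
      by move=> x /andP[_ /negbTE ->].
    rewrite (eq_bigr (fun _ => 1)); last by move=> x /andP[_ ->].
    rewrite sumr_const; congr (_ %:R); apply: eq_card => x.
    by rewrite !inE.
  apply: eq_bigr => x /inG Gx; rewrite ind //.
  by case: (x \in H); rewrite ?mulr0n ?mulr0 // mulr1n mulVf ?nz.
have step2 i : \sum_(x in calS) f i x = #|calS|%:R * \prod_l Echi i (Sl l).
  rewrite (sum_prodS defG sSG (f1 i) (fM i)) cardS -big_split; apply: eq_bigr => l _.
  by rewrite /Echi /= mulVKf // nz // card_gt0.
have P0 : \prod_l Echi (0 : Iirr (G / H)%G) (Sl l) = 1.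
  apply: big1 => l _; rewrite /Echi.
  rewrite (eq_bigr (fun _ => 1)) ?sumr_const ?mulVf ?nz ?card_gt0 //.
  move=> x Sx; rewrite irr0 cfun1E mem_quotient //.
  rewrite -(bigdprodWY defG); apply: mem_gen; apply/bigcupP; exists l => //; exact: (subsetP (sSG l)).
rewrite step1 (eq_bigr _ (fun i _ => step2 i)) -big_distrr /= (bigD1 0) //= P0.
rewrite (eq_bigl (fun i => (i != 0) && ('chi_i \is a linear_char))); last first.
  by move=> i; rewrite lin andbT.
rewrite -(Lagrange sHG) -(card_quotient nGH) natrM.
have := nz _ QH0; have := nz _ (cardG_gt0 H).
set a := (#|(G / H)%g|%:R : algC); set b := (#|H|%:R : algC).
move=> bn an; field.
by rewrite an bn.
Qed.

Local Close Scope ring_scope.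

Theorem theorem3p4 (gT : finGroupType) (I : finType)
    (Gl : I -> {group gT}) (G H : {group gT}) (Sl : I -> {set gT}) :
  (\big[dprod/1]_(l : I) Gl l)%g = G ->
  H \subset G ->
  (forall l : I, Gl l \subset H * (\prod_(j : I | j != l) Gl j))%g ->
  (H <| G)%g ->
  abelian (G / H)%g ->
  (forall l : I, Sl l \subset Gl l) ->
  (forall l : I, Sl l != set0) ->
  let calS := (\prod_(l : I) Sl l)%g in
  ((#|calS :&: H|%:R / #|H|%:R : algC) =
   (1 + \sum_(i : Iirr (G / H)%G | (i != 0) && ('chi_i \is a linear_char))
          \prod_(l : I) Echi i (Sl l)) * (#|calS|%:R / #|G|%:R))%R.
Proof. exact: theorem3p4_aux. Qed.
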